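(* Let $X,Y$ be Banach spaces, let $T\in\mathcal{L}(X,Y)$ be a monomorphism, and let $C\subset X$ be bounded. \begin{itemize} \item[(1)] If $x_0\in C$ satisfies $\|Tx_0\|=\sup\{\|Tx\|\colon x\in C\}$ and $Tx_0$ is an LUR point of $Y$, then $x_0$ is a strongly exposed point of $C$. Moreover, $x_0$ is strongly exposed (in $C$) by $T^*y^*$ for every $y^*\in S_{Y^*}$ such that $\operatorname{Re}y^*(Tx_0)=\sup\{\|Tx\|\colon x\in C\}$. \item[(2)] If $x_0\in C$ satisfies $\|Tx_0\|=\sup\{\|Tx\|\colon x\in C\}$ and $Tx_0$ is a rotund point of $Y$, then $x_0$ is an exposed point of $C$. Moreover, $x_0$ is exposed by $T^*y^*$ for every $y^*\in S_{Y^*}$ such that $\operatorname{Re}y^*(Tx_0)=\sup\{\|Tx\|\colon x\in C\}$. \end{itemize}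
   Context: A monomorphism is an operator $T\in\mathcal{L}(X,Y)$ which is an isomorphism onto its range (equivalently, $\|Tx\|\ge c\|x\|$ for some $c>0$ and all $x$). A point $y_0\in Y$ is an LUR point if whenever $\{y_n\}\subset Y$ satisfies $\|y_n\|\le\|y_0\|$ and $\|y_n+y_0\|\to2\|y_0\|$, then $\|y_n-y_0\|\to0$. A point $y_0$ is a rotund point if every $y$ with $\|y\|\le\|y_0\|$ and $\|y+y_0\|=2\|y_0\|$ equals $y_0$. A point $x_0\in C$ is exposed by $x^*\in X^*$ if $\operatorname{Re}x^*(x_0)=\sup_C\operatorname{Re}x^*$ and $x_0$ is the only point of $C$ where this supremum is attained; it is strongly exposed by $x^*$ if moreover every sequence $\{x_n\}\subset C$ with $\operatorname{Re}x^*(x_n)\to\operatorname{Re}x^*(x_0)$ converges in norm to $x_0$. $S_{Y^*}$ is the unit sphere of $Y^*$. *)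

(* Defs.v *)
From HB Require Import structures.
From mathcomp Require Import all_boot all_order all_algebra.
From mathcomp Require Import all_classical all_reals all_analysis.
From mathcomp Require Import complex.
Import numFieldNormedType.Exports.
Import Order.TTheory GRing.Theory Num.Theory.

Set Implicit Arguments.
Unset Strict Implicit.
Unset Printing Implicit Defensive.

Local Open Scope ring_scope.
Local Open Scope classical_set_scope.

(* Throughout, K is the scalar field (R or C), and [re : K -> K] is the real
   part map (the identity for K = R, and z |-> 'Re z for K = C).  Norms of
   vectors are elements of K (real elements), as in MathComp-Analysis. *)

Section Defs.
Variable K : numFieldType.
Variable re : K -> K.

Definition bounded_set (X : normedModType K) (C : set X) : Prop :=
  exists M : K, forall x, C x -> `|x| <= M.

Definition monomorphism (X Y : normedModType K) (T : X -> Y) : Prop :=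
  exists2 c : K, 0 < c & forall x, c * `|x| <= `|T x|.

Definition bounded_operator (X Y : normedModType K) (T : {linear X -> Y}) : Prop :=
  continuous T.

Definition dual_elt (X : normedModType K) (f : {linear X -> K^o}) : Prop :=
  continuous f.

Definition dual_norm_one (X : normedModType K) (f : X -> K) : Prop :=
  (forall x, `|x| <= 1 -> `|f x| <= 1) /\
  (forall e : K, 0 < e -> exists x, `|x| <= 1 /\ 1 - e < `|f x|).

Definition LUR_point (Y : normedModType K) (y0 : Y) : Prop :=
  forall y : nat -> Y, (forall n, `|y n| <= `|y0|) ->
    (fun n => `|y n + y0|) @ \oo --> 2 * `|y0| ->
    (fun n => `|y n - y0|) @ \oo --> (0 : K).

Definition rotund_point (Y : normedModType K) (y0 : Y) : Prop :=
  forall y : Y, `|y| <= `|y0| -> `|y + y0| = 2 * `|y0| -> y = y0.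

Definition exposed_by (X : normedModType K) (C : set X) (x0 : X) (f : X -> K) : Prop :=
  [/\ C x0,
      (forall x, C x -> re (f x) <= re (f x0)) &
      (forall x, C x -> re (f x) = re (f x0) -> x = x0)].

Definition strongly_exposed_by (X : normedModType K) (C : set X) (x0 : X)
    (f : X -> K) : Prop :=
  exposed_by C x0 f /\
  forall xs : nat -> X, (forall n, C (xs n)) ->
    (fun n => re (f (xs n))) @ \oo --> re (f x0) ->
    (fun n => `|xs n - x0|) @ \oo --> (0 : K).

Definition exposed_point (X : normedModType K) (C : set X) (x0 : X) : Prop :=
  exists f : {linear X -> K^o}, dual_elt f /\ exposed_by C x0 f.

Definition strongly_exposed_point (X : normedModType K) (C : set X) (x0 : X) : Prop :=
  exists f : {linear X -> K^o}, dual_elt f /\ strongly_exposed_by C x0 f.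

Definition lemma2p2_claim : Prop :=
  forall (X Y : completeNormedModType K) (T : {linear X -> Y}) (C : set X),
    bounded_operator T -> monomorphism T -> bounded_set C ->
    forall x0 : X, C x0 ->
    (forall x, C x -> `|T x| <= `|T x0|) ->
    (LUR_point (T x0) ->
       strongly_exposed_point C x0 /\
       forall ys : {linear Y -> K^o}, dual_elt ys -> dual_norm_one ys ->
         re (ys (T x0)) = `|T x0| ->
         strongly_exposed_by C x0 (fun x => ys (T x))) /\
    (rotund_point (T x0) ->
       exposed_point C x0 /\
       forall ys : {linear Y -> K^o}, dual_elt ys -> dual_norm_one ys ->
         re (ys (T x0)) = `|T x0| ->
         exposed_by C x0 (fun x => ys (T x))).

End Defs.

(* Main.v *)
Require Import Defs.
From HB Require Import structures.
From mathcomp Require Import all_boot all_order all_algebra.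
From mathcomp Require Import all_classical all_reals all_analysis.
From mathcomp Require Import complex.
From mathcomp Require Import lra ring.
Import numFieldNormedType.Exports.
Import Order.TTheory GRing.Theory Num.Theory.
Set Implicit Arguments.
Unset Strict Implicit.
Unset Printing Implicit Defensive.
Local Open Scope ring_scope.
Local Open Scope classical_set_scope.

Section HBsec.
Variables (R : realType) (V : lmodType R) (p : V -> R).
Hypothesis pD : forall x y, p (x + y) <= p x + p y.
Hypothesis pZ : forall r x, p (r *: x) = `|r| * p x.

Definition Qlin (G : set (V * R)) :=
  [/\ forall x a y b, G (x,a) -> G (y,b) -> G (x + y, a + b),
      forall r x a, G (x,a) -> G (r *: x, r * a) &
      forall x a, G (x,a) -> a <= p x].

Lemma p0 : p 0 = 0.
Proof. by have := pZ 0 0; rewrite scale0r normr0 mul0r. Qed.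

Lemma pge0 x : 0 <= p x.
Proof.
have := pD x (-x); rewrite subrr p0.
have := pZ (-1) x; rewrite scaleN1r normrN normr1 mul1r => ->; lra.
Qed.

Lemma Q_fun G x a b : Qlin G -> G (x,a) -> G (x,b) -> a = b.
Proof.
move=> [QD QZ Qp] ha hb.
have h1 := QD _ _ _ _ ha (QZ (-1) _ _ hb).
have h2 := QD _ _ _ _ hb (QZ (-1) _ _ ha).
rewrite scaleN1r subrr in h1 h2.
have := Qp _ _ h1; have := Qp _ _ h2; rewrite p0; lra.
Qed.

Variable y0 : V.
Definition G0 : set (V * R) := [set xa | exists t, xa = (t *: y0, t * p y0)].

Lemma QG0 : Qlin G0.
Proof.
split.
- move=> x a y b [t [-> ->]] [s [-> ->]]; exists (t + s).
  by rewrite scalerDl mulrDl.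
- move=> r x a [t [-> ->]]; exists (r * t); by rewrite scalerA mulrA.
- move=> x a [t [-> ->]]; rewrite pZ; apply: ler_wpM2r; first exact: pge0.
  exact: ler_norm.
Qed.

Lemma extend (H : set (V * R)) z : Qlin H -> G0 `<=` H ->
  (forall a, ~ H (z, a)) ->
  exists H', [/\ Qlin H', H `<=` H' & ~ H' `<=` H].
Proof.
move=> [QD QZ Qp] G0H zH.
have H00 : H (0, 0).
  have := G0H (0 *: y0, 0 * p y0) (ex_intro _ 0 erefl).
  by rewrite scale0r mul0r.
pose L := [set e | exists d a, H (d, a) /\ e = a - p (d - z)].
have Lne : L !=set0 by exists (0 - p (0 - z)); exists 0, 0.
have Lub : forall d' a', H (d', a') -> ubound L (p (d' + z) - a').
  move=> d' a' hd' e [d [a [hd ->]]].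
  have := Qp _ _ (QD _ _ _ _ hd hd').
  have := pD (d - z) (d' + z).
  have -> : d - z + (d' + z) = d + d' by rewrite addrACA addNr addr0.
  lra.
have hs : has_sup L by split => //; exists (p (0 + z) - 0); exact: Lub.
pose c := sup L.
have cle : forall d' a', H (d', a') -> c <= p (d' + z) - a'.
  by move=> d' a' hd'; apply: ge_sup => //; exact: Lub.
have gec : forall d a, H (d, a) -> a - p (d - z) <= c.
  by move=> d a hd; apply: sup_upper_bound => //; exists d, a.
pose H' := [set xa | exists d a t, H (d, a) /\ xa = (d + t *: z, a + t * c)].
exists H'; split.
- split.
  + move=> x a y b [d [e [t [hd [-> ->]]]]] [d' [e' [t' [hd' [-> ->]]]]].
    exists (d + d'), (e + e'), (t + t'); split; first exact: QD.
    congr (_, _); first by rewrite scalerDl addrACA.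
    by rewrite mulrDl addrACA.
  + move=> r x a [d [e [t [hd [-> ->]]]]].
    exists (r *: d), (r * e), (r * t); split; first exact: QZ.
    by rewrite scalerDr scalerA mulrDr mulrA.
  + move=> x a [d [e [t [hd [-> ->]]]]].
    case: (ltrgtP t 0) => ht.
    * pose s := - t.
      have hs0 : 0 < s by rewrite /s oppr_gt0.
      have := gec _ _ (QZ (s^-1) _ _ hd).
      have -> : d + t *: z = s *: (s^-1 *: d - z).
        by rewrite scalerBr scalerA mulfV ?gt_eqF // scale1r /s scaleNr opprK.
      rewrite pZ gtr0_norm // => h.
      have h2 : s * (s^-1 * e - p (s^-1 *: d - z)) <= s * c.
        by apply: ler_wpM2l => //; exact: ltW.
      rewrite mulrBr mulrA mulfV ?gt_eqF // mul1r in h2.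
      rewrite /s in h2 *; lra.
    * have := cle _ _ (QZ (t^-1) _ _ hd) => h.
      have -> : d + t *: z = t *: (t^-1 *: d + z).
        by rewrite scalerDr scalerA mulfV ?gt_eqF // scale1r.
      rewrite pZ gtr0_norm //.
      have h2 : t * c <= t * (p (t^-1 *: d + z) - t^-1 * e).
        by apply: ler_wpM2l => //; exact: ltW.
      rewrite mulrBr mulrA mulfV ?gt_eqF // mul1r in h2.
      lra.
    * by rewrite ht scale0r addr0 mul0r addr0; exact: Qp.
- move=> [x a] hx; exists x, a, 0; split => //.
  by rewrite scale0r addr0 mul0r addr0.
- move=> sub.
  have : H' (z, c) by exists 0, 0, 1; split => //; rewrite scale1r add0r mul1r add0r.
  by move=> /sub /zH.
Qed.

Lemma HB_real : exists u : V -> R,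
  [/\ forall x y, u (x + y) = u x + u y, forall r x, u (r *: x) = r * u x,
      forall x, u x <= p x & u y0 = p y0].
Proof.
pose P := fun A : set (V * R) => Qlin (G0 `|` A).
have [A [PA Amax]] : exists A, P A /\ forall B, A `<` B -> ~ P B.
  apply: Zorn_bigcup => F FP Ftot.
  pose U := G0 `|` \bigcup_(X in F) X.
  have key : forall e1 e2, U e1 -> U e2 ->
      exists S, [/\ P S, (G0 `|` S) `<=` U, (G0 `|` S) e1 & (G0 `|` S) e2].
    move=> e1 e2 [h1|[X FX h1]] [h2|[Y FY h2]].
    + exists set0; rewrite /P setU0; split => //; [exact: QG0|by move=> e he; left].
    + exists Y; split; [exact: FP| |by left|by right].
      by move=> e [?|?]; [left|right; exists Y].
    + exists X; split; [exact: FP| |by right|by left].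
      by move=> e [?|?]; [left|right; exists X].
    + have [XY|YX] := Ftot _ _ FX FY.
      * exists Y; split; [exact: FP| |by right; apply: XY|by right].
        by move=> e [?|?]; [left|right; exists Y].
      * exists X; split; [exact: FP| |by right|by right; apply: YX].
        by move=> e [?|?]; [left|right; exists X].
  split.
  + move=> x a y b h1 h2; have [S [[QD _ _] SU s1 s2]] := key _ _ h1 h2.
    exact/SU/QD.
  + move=> r x a h1; have [S [[_ QZ _] SU s1 _]] := key _ _ h1 h1.
    exact/SU/QZ.
  + move=> x a h1; have [S [[_ _ Qp] SU s1 _]] := key _ _ h1 h1.
    exact: Qp.
pose H := G0 `|` A.
have G0H : G0 `<=` H by move=> e he; left.
have full : forall x, exists a, H (x, a).
  move=> z; apply: contrapT => nz.
  have [H' [QH' HH' nH'H]] := extend PA G0H (fun a h => nz (ex_intro _ a h)).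
  apply: (Amax H').
    split; first by move=> e he; apply: HH'; right.
    by move=> H'A; apply: nH'H => e /H'A he; right.
  by rewrite /P setUidr // => e /G0H /HH'.
have [u hu] := choice full.
have QH : Qlin H := PA.
case: (QH) => [QD QZ Qp].
exists u; split.
- move=> x y; apply: (Q_fun QH (hu (x + y))); exact: QD.
- move=> r x; apply: (Q_fun QH (hu (r *: x))); exact: QZ.
- move=> x; exact: Qp.
- apply: (Q_fun QH (hu y0)); apply: G0H; exists 1; by rewrite scale1r mul1r.
Qed.
End HBsec.
Section Gen.
Variables (K : numFieldType) (re : K -> K).
Hypothesis re_le : forall z, re z <= `|z|.
Hypothesis reD : forall a b, re (a + b) = re a + re b.

Lemma cst_cvg_eq (a b : K) : (fun n : nat => a) @ \oo --> b -> a = b.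
Proof. by move=> h; apply: (cvg_unique (@norm_hausdorff K K^o) (cvg_cst a) h). Qed.

Lemma LUR_rotund (Y : normedModType K) (y0 : Y) : LUR_point y0 -> rotund_point y0.
Proof.
move=> L y hy hs.
have := L (fun _ => y) (fun _ => hy); rewrite hs => /(_ (cvg_cst _)).
move/cst_cvg_eq/eqP; rewrite normr_eq0 subr_eq0 => /eqP //.
Qed.

Lemma two_mul (N : K) : 2 * N = N + N.
Proof. by rewrite mulr_natl mulr2n. Qed.

Lemma bound_cont (Y : normedModType K) (f : {linear Y -> K^o}) :
  (forall y, `|f y| <= `|y|) -> continuous f.
Proof.
move=> fb y; apply/cvgrPdist_lt => e e0.
near=> z. rewrite -linearB. apply: le_lt_trans (fb _) _. near: z.
apply: (@cvgr_dist_lt _ _ _ _ _ id) => //.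
Unshelve. all: end_near. Qed.

Variables (X Y : normedModType K) (T : {linear X -> Y}) (C : set X) (c : K).
Hypothesis c0 : 0 < c.
Hypothesis Tmono : forall x, c * `|x| <= `|T x|.
Variable x0 : X.
Hypothesis Cx0 : C x0.
Hypothesis Tmax : forall x, C x -> `|T x| <= `|T x0|.
Variable f : {linear Y -> K^o}.
Hypothesis fb : forall y, `|(f y : K)| <= `|y|.
Hypothesis fx0 : re (f (T x0)) = `|T x0|.

Lemma T_inj x : T x = T x0 -> x = x0.
Proof.
move=> e; have := Tmono (x - x0); rewrite linearB e subrr normr0.
rewrite pmulr_rle0 // normr_le0 subr_eq0 => /eqP //.
Qed.

Lemma le_N x : C x -> re (f (T x)) <= `|T x0|.
Proof.
move=> Cx; apply: le_trans (re_le _) _; exact: (le_trans (fb (T x)) (Tmax Cx)).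
Qed.

Lemma sum_ge x : re (f (T x)) + `|T x0| <= `|T x + T x0|.
Proof.
rewrite -fx0 -reD -(linearD f); apply: le_trans (re_le _) _; exact: fb.
Qed.

Lemma sum_le x : C x -> `|T x + T x0| <= 2 * `|T x0|.
Proof.
move=> Cx; rewrite two_mul; apply: le_trans (ler_normD _ _) _.
by apply: lerD => //; exact: Tmax.
Qed.

Lemma exp_core : rotund_point (T x0) -> exposed_by re C x0 (fun x => f (T x)).
Proof.
move=> rot; split => //.
- by move=> x Cx /=; rewrite fx0; exact: le_N.
- move=> x Cx /= e; apply: T_inj; apply: rot; first exact: Tmax.
  apply/eqP; rewrite eq_le sum_le //=.
  by have := sum_ge x; rewrite e fx0 two_mul.
Qed.

Lemma sexp_core : LUR_point (T x0) -> strongly_exposed_by re C x0 (fun x => f (T x)).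
Proof.
move=> L; split; first exact/exp_core/LUR_rotund.
move=> xs Cxs /= hc.
have h1 : (fun n => `|T (xs n) + T x0|) @ \oo --> 2 * `|T x0|.
  apply/cvgrPdist_le => e e0.
  move/cvgrPdist_le: hc => /(_ e e0); apply: filterS => n hn.
  have a1 := sum_le (Cxs n).
  have a2 := sum_ge (xs n).
  have a3 := le_N (Cxs n).
  rewrite ger0_norm ?subr_ge0 //.
  rewrite fx0 ger0_norm ?subr_ge0 // in hn.
  apply: le_trans _ hn.
  rewrite two_mul; apply: le_trans (lerB (lexx _) a2) _.
  by rewrite le_eqVlt; apply/orP; left; apply/eqP; ring.
have := L (fun n => T (xs n)) (fun n => Tmax (Cxs n)) h1 => h2.
apply/cvgrPdist_le => e e0.
have ce0 : 0 < c * e by exact: mulr_gt0.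
move/cvgrPdist_le: h2 => /(_ _ ce0); apply: filterS => n hn.
rewrite sub0r normrN normr_id in hn *.
rewrite -(ler_pM2l c0); apply: le_trans hn.
rewrite -(linearB T) sub0r normrN normr_id; exact: Tmono.
Qed.
End Gen.
Lemma norm1_bound (K : numFieldType) (Y : normedModType K) (f : {linear Y -> K^o}) :
  dual_norm_one f -> forall y, `|(f y : K)| <= `|y|.
Proof.
move=> [h _] y; have [->|yn0] := eqVneq y 0; first by rewrite linear0 normr0.
have ny : 0 < `|y| by rewrite normr_gt0.
have := h (`|y|^-1 *: y).
rewrite normrZ ger0_norm ?invr_ge0 // mulVf ?gt_eqF // lexx => /(_ isT).
by rewrite linearZ /= normrM ger0_norm ?invr_ge0 // ler_pdivrMl // mulr1.
Qed.

Lemma claim_gen (K : numFieldType) (re : K -> K)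
  (re_le : forall z, re z <= `|z|) (reD : forall a b, re (a + b) = re a + re b)
  (HBK : forall (Y : normedModType K) (y0 : Y), exists f : {linear Y -> K^o},
     (forall y, `|(f y : K)| <= `|y|) /\ re (f y0) = `|y0|) :
  lemma2p2_claim re.
Proof.
move=> X Y T C Tcont [c c0 Tmono] _ x0 Cx0 Tmax.
have [f [fb fx0]] := HBK Y (T x0).
pose g : {linear X -> K^o} := f \o T.
have gcont : dual_elt g.
  move=> x; apply: continuous_comp; first exact: Tcont.
  exact: bound_cont.
split.
- move=> L; split.
  + exists g; split => //; exact: (sexp_core re_le reD c0 Tmono Cx0 Tmax fb fx0 L).
  + move=> ys _ ys1 hys.
    exact: (sexp_core re_le reD c0 Tmono Cx0 Tmax (norm1_bound ys1) hys L).
- move=> L; split.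
  + exists g; split => //; exact: (exp_core re_le reD c0 Tmono Cx0 Tmax fb fx0 L).
  + move=> ys _ ys1 hys.
    exact: (exp_core re_le reD c0 Tmono Cx0 Tmax (norm1_bound ys1) hys L).
Qed.
Lemma mk_linear (K : numFieldType) (Y : lmodType K) (u : Y -> K)
  (uD : forall x y, u (x + y) = u x + u y) (uZ : forall r x, u (r *: x) = r * u x) :
  exists f : {linear Y -> K^o}, forall y, f y = u y.
Proof.
have lin : linear_for *:%R (u : Y -> K^o).
  by move=> a x y; rewrite uD uZ.
exists (HB.pack_for {linear Y -> K^o} (u : Y -> K^o) (GRing.isLinear.Build K Y K^o *:%R (u : Y -> K^o) lin)).
by [].
Qed.

Lemma HB_R (R : realType) (Y : normedModType R) (y0 : Y) :
  exists f : {linear Y -> R^o}, (forall y, `|(f y : R)| <= `|y|) /\ id (f y0) = `|y0|.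
Proof.
have [u [uD uZ up uy0]] := @HB_real R Y (fun y => `|y|) (@ler_normD _ _) (@normrZ _ _) y0.
have [f fu] := mk_linear uD uZ.
exists f; split; last by rewrite fu.
move=> y; rewrite fu ler_norml up andbT.
have := up (- y); rewrite normrN.
have -> : u (- y) = - u y by rewrite -scaleN1r uZ mulN1r.
by rewrite lerNl.
Qed.

Lemma claim_R (R : realType) : lemma2p2_claim (K := R) id.
Proof.
apply: claim_gen => //; first by move=> z; exact: ler_norm.
exact: HB_R.
Qed.
Local Open Scope complex_scope.
Definition realv (R : realType) (Y : lmodType R[i]) : Type := Y.
HB.instance Definition _ (R : realType) (Y : lmodType R[i]) :=
  GRing.Zmodule.on (realv Y).
Definition rscale (R : realType) (Y : lmodType R[i]) (r : R) (v : realv Y) : realv Y :=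
  (r%:C *: (v : Y)).
Lemma rscaleA (R : realType) (Y : lmodType R[i]) a b (v : realv Y) :
  rscale a (rscale b v) = rscale (a * b) v.
Proof. by rewrite /rscale scalerA rmorphM. Qed.
Lemma rscale1 (R : realType) (Y : lmodType R[i]) (v : realv Y) : rscale 1 v = v.
Proof. by rewrite /rscale rmorph1 scale1r. Qed.
Lemma rscaleDr (R : realType) (Y : lmodType R[i]) a : {morph (@rscale R Y a) : u v / u + v}.
Proof. by move=> u v; rewrite /rscale scalerDr. Qed.
Lemma rscaleDl (R : realType) (Y : lmodType R[i]) (v : realv Y) :
  {morph (@rscale R Y)^~ v : a b / a + b}.
Proof. by move=> a b; rewrite /rscale raddfD scalerDl. Qed.
HB.instance Definition _ (R : realType) (Y : lmodType R[i]) :=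
  GRing.Zmodule_isLmodule.Build R (realv Y) (@rscaleA R Y) (@rscale1 R Y)
    (@rscaleDr R Y) (@rscaleDl R Y).
Lemma t2 (R : realType) (c : R[i]) (U1 U2 : R) :
  (complex.Re c * U1 + complex.Im c * U2)%:C - 'i * (complex.Re ('i * c) * U1 + complex.Im ('i * c) * U2)%:C
  = c * (U1%:C - 'i * U2%:C).
Proof.
case: c => a b.
apply/eqP; rewrite eq_complex /=; apply/andP; split; apply/eqP; ring.
Qed.
Lemma t3 (R : realType) (U1 U2 : R) : complex.Re (U1%:C - 'i * U2%:C) = U1.
Proof. rewrite /=; ring. Qed.
Lemma ReD (R : realType) (a b : R[i]) : complex.Re (a + b) = complex.Re a + complex.Re b.
Proof. by case: a; case: b. Qed.

Lemma ReM_real (R : realType) (k : R) (w : R[i]) : complex.Re (k%:C * w) = k * complex.Re w.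
Proof. by case: w => a b /=; rewrite mul0r subr0. Qed.

Lemma normC_real (R : realType) (r : R) : `|r%:C| = `|r|%:C.
Proof. by rewrite normc_def /= expr0n /= addr0 sqrtr_sqr. Qed.

Lemma norm_le_Re (R : realType) (a b : R[i]) : 0 <= a -> 0 <= b -> complex.Re a <= complex.Re b -> a <= b.
Proof.
move=> a0 b0 h; rewrite lecE h andbT (ger0_Im a0) (ger0_Im b0) //.
Qed.

Lemma HB_C (R : realType) (Y : normedModType R[i]) (y0 : Y) :
  exists f : {linear Y -> R[i]^o},
    (forall y, `|(f y : R[i])| <= `|y|) /\ (complex.Re (f y0))%:C = `|y0|.
Proof.
pose V := realv Y.
pose p : V -> R := fun v => complex.Re `|(v : Y)|.
have pD : forall x y : V, p (x + y) <= p x + p y.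
  move=> x y; rewrite /p -ReD.
  have := ler_normD (x : Y) (y : Y); rewrite lecE => /andP[_]; exact.
have pZ : forall r (x : V), p (r *: x) = `|r| * p x.
  move=> r x; rewrite /p.
  change (complex.Re `|r%:C *: (x : Y)| = `|r| * complex.Re `|(x : Y)|).
  by rewrite normrZ normC_real ReM_real.
have [u [uD uZ up uy0]] := @HB_real R V p pD pZ y0.
have uD' : forall x y : Y, u (x + y) = u x + u y := uD.
have uZ' : forall r (y : Y), u (r%:C *: y) = r * u y := uZ.
have up' : forall y : Y, u y <= complex.Re `|y| := up.
have uC : forall (c : R[i]) (y : Y), u (c *: y) = complex.Re c * u y + complex.Im c * u ('i *: y).
  move=> c y.
  have -> : c *: y = (complex.Re c)%:C *: y + (complex.Im c)%:C *: ('i *: y).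
    by rewrite scalerA -scalerDl mulrC -complexE.
  by rewrite uD' !uZ'.
pose g : Y -> R[i] := fun y => (u y)%:C - 'i * (u ('i *: y))%:C.
have gD : forall x y, g (x + y) = g x + g y.
  by move=> x y; rewrite /g scalerDr !uD' !raddfD; ring.
have gZ : forall c y, g (c *: y) = c * g y.
  by move=> c y; rewrite /g scalerA (uC ('i * c)) (uC c); exact: t2.
have gRe : forall y, complex.Re (g y) = u y.
  by move=> y; rewrite /g; exact: t3.
have [f fg] := @mk_linear _ Y g gD gZ.
exists f; split; last by rewrite fg gRe uy0 RRe_real // normr_real.
move=> y; rewrite fg.
have [->|w0] := eqVneq (g y) 0; first by rewrite normr0.
pose c := `|g y| / g y.
have cw : c * g y = `|g y| by rewrite /c mulrVK // unitfE.
have c1 : `|c| = 1 by rewrite /c normrM normrV ?unitfE // normr_id mulfV // normr_eq0.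
apply: norm_le_Re => //.
rewrite -cw -gZ gRe; apply: le_trans (up' _) _.
by rewrite normrZ c1 mul1r.
Qed.

Lemma claim_C (R : realType) :
  lemma2p2_claim (K := R[i]) (fun z : R[i] => ((complex.Re z)%:C)%C).
Proof.
apply: claim_gen.
- move=> z; apply: le_trans (normc_ge_Re z); rewrite lecR; exact: ler_norm.
- by move=> a b; rewrite ReD raddfD.
- exact: HB_C.
Qed.

Theorem lemma2p2 (R : realType) :
  lemma2p2_claim (K := R) id /\
  lemma2p2_claim (K := R[i]) (fun z : R[i] => ((complex.Re z)%:C)%C).
Proof. split; [exact: claim_R | exact: claim_C]. Qed.
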